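(* Let $V$ be a vertex operator algebra of CFT type and $M=\bigoplus_{n\ge0}M(n)$ an admissible $V$-module which is strongly generated by a homogeneous subspace $W\subseteq M$. Then $M/C_2(M)$ is generated, as a module over the commutative algebra $V/C_2(V)$, by $\{w+C_2(M):w\in W\}$.
   Context: $V_0=\mathbb{C}\mathbf{1}$, $V_+=\bigoplus_{n\ge1}V_n$; $Y_M(a,z)=\sum_na_nz^{-n-1}$. $C_2(V)=\mathrm{span}\{a_{-2}b:a,b\in V\}$, $C_2(M)=\mathrm{span}\{a_{-2}v:a\in V,v\in M\}$; $V/C_2(V)$ is a commutative algebra with product $(a+C_2(V))(b+C_2(V))=a_{-1}b+C_2(V)$, and $M/C_2(M)$ is a $V/C_2(V)$-module via $(a+C_2(V)).(v+C_2(M))=a_{-1}v+C_2(M)$. $M$ is strongly generated by $W$ if $M$ is spanned by $a^1_{-n_1}\cdots a^k_{-n_k}w$ with $k\ge0$, $a^i\in V_+$ homogeneous, $n_i\ge1$, $w\in W$. *)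

(* Defs.v *)
From HB Require Import structures.
From mathcomp Require Import all_boot all_order all_algebra.
From mathcomp Require Import reals complex.
Set Implicit Arguments. Unset Strict Implicit. Unset Printing Implicit Defensive.
Import Order.TTheory GRing.Theory Num.Theory.
Local Open Scope ring_scope.

Section VOADefs.
Variable K : fieldType.

Definition gbinom (n : int) (i : nat) : K :=
  (\prod_(j < i) (n - (j : nat)%:Z)%:~R) / (i`!)%:R.

Definition in_span (U : lmodType K) (S : U -> Prop) (x : U) : Prop :=
  exists (k : nat) (c : 'I_k -> K) (s : 'I_k -> U),
    (forall i, S (s i)) /\ x = \sum_(i < k) c i *: s i.

Definition subspace (U : lmodType K) (S : U -> Prop) : Prop :=
  [/\ S 0, (forall x y, S x -> S y -> S (x + y)) & (forall c x, S x -> S (c *: x))].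

(* Y a n u = a_n u  (the coefficient of z^{-n-1} in Y(a,z)u) *)
Definition modes_bilinear (V U : lmodType K) (Y : V -> int -> U -> U) : Prop :=
  (forall (c : K) a b n u, Y (c *: a + b) n u = c *: Y a n u + Y b n u) /\
  (forall a n (c : K) u w, Y a n (c *: u + w) = c *: Y a n u + Y a n w).

Definition truncation (V U : lmodType K) (Y : V -> int -> U -> U) : Prop :=
  forall a u, exists N : int, forall n, N <= n -> Y a n u = 0.

(* Borcherds identity (equivalent to the Jacobi identity).  All sums are
   finite by truncation; "the truncated sums agree for all large N" is
   exactly the equality of these (finitely supported) infinite sums. *)
Definition borcherds (V U : lmodType K) (YV : V -> int -> V -> V)
    (Y : V -> int -> U -> U) : Prop :=
  forall (a b : V) (u : U) (p q r : int), exists N0 : nat, forall N : nat, (N0 <= N)%N ->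
    \sum_(i < N) gbinom p i *: Y (YV a (r + (i : nat)%:Z) b) (p + q - (i : nat)%:Z) u =
    \sum_(i < N) ((-1) ^+ i * gbinom r i) *:
       (Y a (p + r - (i : nat)%:Z) (Y b (q + (i : nat)%:Z) u)
        - (-1) ^+ (absz r) *: Y b (q + r - (i : nat)%:Z) (Y a (p + (i : nat)%:Z) u)).

(* A vertex operator algebra; L(n) = omega_{n+1}, V_n = L(0)-eigenspace for n *)
Record VOA (V : lmodType K) := {
  Y : V -> int -> V -> V;
  vac : V;
  omega : V;
  central_charge : K;
  Y_bilin : modes_bilinear Y;
  Y_trunc : truncation Y;
  Y_vac : forall n v, Y vac n v = if n == -1 then v else 0;
  Y_create : forall a n, 0 <= n -> Y a n vac = 0;
  Y_create1 : forall a, Y a (-1) vac = a;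
  Y_borcherds : borcherds Y Y;
  Y_virasoro : forall (m n : int) v,
    Y omega (m + 1) (Y omega (n + 1) v) - Y omega (n + 1) (Y omega (m + 1) v) =
    (m - n)%:~R *: Y omega (m + n + 1) v
    + (if m + n == 0 then ((m ^+ 3 - m)%:~R / 12%:R * central_charge) *: v else 0);
  Y_grading : forall v, exists (k : nat) (ws : 'I_k -> int) (vs : 'I_k -> V),
    (forall i, Y omega 1 (vs i) = (ws i)%:~R *: vs i) /\ v = \sum_(i < k) vs i;
  Y_findim : forall n : int, exists (k : nat) (b : 'I_k -> V), forall v,
    Y omega 1 v = n%:~R *: v -> in_span (fun x => exists i, x = b i) v;
  Y_lower : exists N : int, forall (n : int) v, n < N -> Y omega 1 v = n%:~R *: v -> v = 0;
  (* Y(L(-1)a, z) = d/dz Y(a, z) *)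
  Y_deriv : forall a n b, Y (Y omega 0 a) n b = - (n%:~R) *: Y a (n - 1) b
}.

Definition homog (V : lmodType K) (Vs : VOA V) (n : int) (a : V) : Prop :=
  Y Vs (omega Vs) 1 a = n%:~R *: a.

Definition CFT_type (V : lmodType K) (Vs : VOA V) : Prop :=
  (forall n a, n < 0 -> homog Vs n a -> a = 0) /\
  (forall a, homog Vs 0 a -> exists c : K, a = c *: vac Vs).

Definition gradz (M : lmodType K) (Mg : nat -> M -> Prop) (j : int) (x : M) : Prop :=
  match j with Posz n => Mg n x | Negz _ => x = 0 end.

Record admissible_module (V : lmodType K) (Vs : VOA V) (M : lmodType K) := {
  YM : V -> int -> M -> M;
  Mg : nat -> M -> Prop;
  YM_bilin : modes_bilinear YM;
  YM_trunc : truncation YM;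
  YM_vac : forall n w, YM (vac Vs) n w = if n == -1 then w else 0;
  YM_borcherds : borcherds (Y Vs) YM;
  Mg_subspace : forall n, subspace (Mg n);
  Mg_span : forall w, exists (k : nat) (ns : 'I_k -> nat) (ws : 'I_k -> M),
    (forall i, Mg (ns i) (ws i)) /\ w = \sum_(i < k) ws i;
  Mg_indep : forall (k : nat) (ws : 'I_k -> M),
    (forall i : 'I_k, Mg i (ws i)) -> \sum_(i < k) ws i = 0 -> forall i, ws i = 0;
  YM_grad : forall a (k m : int) (n : nat) x, homog Vs k a -> Mg n x ->
    gradz Mg (k - m - 1 + n%:Z) (YM a m x)
}.

Section Module.
Variables (V : lmodType K) (Vs : VOA V) (M : lmodType K) (Ms : admissible_module Vs M).

Definition homogeneous_subspace (W : M -> Prop) : Prop :=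
  subspace W /\ forall w, W w -> exists (k : nat) (ns : 'I_k -> nat) (ws : 'I_k -> M),
    (forall i, W (ws i) /\ Mg Ms (ns i) (ws i)) /\ w = \sum_(i < k) ws i.

(* a^1_{-n_1} ... a^k_{-n_k} w for l = [:: (a^1,n_1); ...; (a^k,n_k)] *)
Definition mode_word (l : seq (V * nat)) (w : M) : M :=
  foldr (fun p x => YM Ms p.1 (- (p.2)%:Z) x) w l.

Definition homog_pos (a : V) : Prop := exists n : int, 1 <= n /\ homog Vs n a.

Definition strongly_generated (W : M -> Prop) : Prop :=
  forall m : M, in_span (fun x => exists (l : seq (V * nat)) (w : M),
      [/\ forall p, p \in l -> homog_pos p.1 /\ (1 <= p.2)%N, W w & x = mode_word l w]) m.

Definition C2M (x : M) : Prop := in_span (fun y => exists a v, y = YM Ms a (-2) v) x.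

End Module.
End VOADefs.

(* Main.v *)
Require Import Defs.
From HB Require Import structures.
From mathcomp Require Import all_boot all_order all_algebra.
From mathcomp Require Import reals complex.
From mathcomp Require Import boolp zify.
Import Order.TTheory GRing.Theory Num.Theory.
Local Open Scope ring_scope.

Section Span.
Variables (K : fieldType) (U : lmodType K) (S : U -> Prop).

Lemma span0 : in_span S 0.
Proof. exists 0%N, (fun _ => 0), (fun _ => 0); split; first by case.
by rewrite big_ord0. Qed.

Lemma span1 x : S x -> in_span S x.
Proof. move=> Sx; exists 1%N, (fun _ => 1), (fun _ => x); split=> //.
by rewrite big_ord1 scale1r. Qed.

Lemma spanZ c x : in_span S x -> in_span S (c *: x).
Proof. case=> k [d [s [Hs ->]]]; exists k, (fun i => c * d i), s; split=> //.
rewrite scaler_sumr; apply: eq_bigr => i _; by rewrite scalerA. Qed.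

Lemma spanD x y : in_span S x -> in_span S y -> in_span S (x + y).
Proof.
case=> k1 [c1 [s1 [H1 ->]]]; case=> k2 [c2 [s2 [H2 ->]]].
exists (k1 + k2)%N,
  (fun i => match split i with inl j => c1 j | inr j => c2 j end),
  (fun i => match split i with inl j => s1 j | inr j => s2 j end).
split.
  by move=> i; case: (split i).
rewrite big_split_ord /=; congr (_ + _); apply: eq_bigr => i _.
  by rewrite (unsplitK (inl i)).
by rewrite (unsplitK (inr i)).
Qed.

Lemma spanN x : in_span S x -> in_span S (- x).
Proof. by move=> h; rewrite -scaleN1r; apply: spanZ. Qed.

Lemma spanB x y : in_span S x -> in_span S y -> in_span S (x - y).
Proof. by move=> hx hy; apply: spanD => //; apply: spanN. Qed.

Lemma span_sum k (f : 'I_k -> U) : (forall i, in_span S (f i)) ->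
  in_span S (\sum_(i < k) f i).
Proof.
elim: k f => [|k IH] f H; first by rewrite big_ord0; apply: span0.
by rewrite big_ord_recr /=; apply: spanD => //; apply: IH.
Qed.

Lemma span_ind (Q : U -> Prop) : Q 0 -> (forall x y, Q x -> Q y -> Q (x + y)) ->
  (forall c x, Q x -> Q (c *: x)) -> (forall x, S x -> Q x) ->
  forall x, in_span S x -> Q x.
Proof.
move=> Q0 QD QZ QS x [k [c [s [Hs ->]]]].
elim: k c s Hs => [|k IH] c s Hs; first by rewrite big_ord0.
rewrite big_ord_recr /=; apply: QD; last by apply: QZ; apply: QS.
by apply: IH.
Qed.

End Span.

Section Main.
Variables (R : realType) (V : lmodType (complex R)) (Vs : VOA V)
    (M : lmodType (complex R)) (Ms : admissible_module Vs M).

Local Notation YM := (YM Ms).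
Local Notation C2 := (C2M Ms).

Lemma YMD a n x y : YM a n (x + y) = YM a n x + YM a n y.
Proof. by rewrite -{1}(scale1r x) (proj2 (YM_bilin Ms)) scale1r. Qed.
Lemma YM0 a n : YM a n 0 = 0.
Proof. have h := YMD a n 0 0; rewrite addr0 in h; apply: (addrI (YM a n 0)); by rewrite -h addr0. Qed.
Lemma YMZ a n c x : YM a n (c *: x) = c *: YM a n x.
Proof. by rewrite -(addr0 (c *: x)) (proj2 (YM_bilin Ms)) YM0 addr0. Qed.

Lemma YMsum a n k (f : 'I_k -> M) : YM a n (\sum_(i < k) f i) = \sum_(i < k) YM a n (f i).
Proof. elim: k f => [|k IH] f; first by rewrite !big_ord0 YM0.
by rewrite !big_ord_recr /= YMD IH. Qed.

Lemma bor a b u p q r M0 : exists N, (M0 <= N)%N /\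
    \sum_(i < N) gbinom (complex R) p i *: YM (Y Vs a (r + (i : nat)%:Z) b) (p + q - (i : nat)%:Z) u =
    \sum_(i < N) ((-1) ^+ i * gbinom (complex R) r i) *:
       (YM a (p + r - (i : nat)%:Z) (YM b (q + (i : nat)%:Z) u)
        - (-1) ^+ (absz r) *: YM b (q + r - (i : nat)%:Z) (YM a (p + (i : nat)%:Z) u)).
Proof.
have [N0 H] := YM_borcherds Ms a b u p q r.
by exists (maxn N0 M0); split; [exact: leq_maxr | apply: H; exact: leq_maxl].
Qed.

Lemma gbinom_r0 r : gbinom (complex R) r 0 = 1.
Proof. by rewrite /gbinom big_ord0 fact0 divr1. Qed.

Lemma gbinom_0S i : gbinom (complex R) 0 i.+1 = 0.
Proof. by rewrite /gbinom big_ord_recl /= subrr mul0r mul0r. Qed.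

Lemma gbinom_m2 i : gbinom (complex R) (-2) i != 0.
Proof.
rewrite /gbinom mulf_neq0 //; last by rewrite invr_eq0 pnatr_eq0 -lt0n fact_gt0.
rewrite prodf_seq_neq0; apply/allP => j _ /=; rewrite intr_eq0; lia.
Qed.

Lemma gbinom_0pos i : (0 < i)%N -> gbinom (complex R) 0 i = 0.
Proof. by case: i => // i _; apply: gbinom_0S. Qed.

Lemma C2_base a v : C2 (YM a (-2) v).
Proof. by apply: span1; exists a, v. Qed.

Lemma L1 n : forall a u, C2 (YM a (- (n.+2)%:Z) u).
Proof.
elim: n => [|n IH] a u; first exact: C2_base.
have [N [HN E]] := bor a (vac Vs) u 0 (- (n.+2)%:Z) (-2) n.+2.
case: N HN E => [|N] // HN E.
move: E; rewrite big_ord_recl gbinom_r0 scale1r big1; last first.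
  by move=> i _; rewrite gbinom_0S scale0r.
rewrite addr0.
have lt : (n.+1 < N.+1)%N by [].
rewrite (bigD1 (Ordinal lt)) //= big1; last first.
  move=> i /eqP ne; rewrite !(YM_vac Ms).
  have -> : (- (n.+2)%:Z + (i : nat)%:Z == -1) = false.
    apply/eqP => h; apply: ne; apply: val_inj => /=; lia.
  have -> : (- (n.+2)%:Z + -2 - (i : nat)%:Z == -1) = false.
    apply/eqP => h; lia.
  by rewrite YM0 scaler0 subrr scaler0.
rewrite addr0 !(YM_vac Ms).
have -> : (- (n.+2)%:Z + (n.+1)%:Z == -1) by apply/eqP; lia.
have -> : (- (n.+2)%:Z + -2 - (n.+1)%:Z == -1) = false by apply/eqP; lia.
have -> : (0 + -2 - (n.+1)%:Z) = - (n.+3)%:Z by lia.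
have -> : (0 + - (n.+2)%:Z - (0%N)%:Z) = - (n.+2)%:Z by lia.
rewrite scaler0 subr0 addr0 => E.
have cne : ((-1) ^+ n.+1 * gbinom (complex R) (-2) n.+1) != 0.
  by rewrite mulf_neq0 ?gbinom_m2 // signr_eq0.
rewrite -[YM a _ u](scalerK cne) -E; apply: spanZ; exact: IH.
Qed.

Lemma L1z a u (k : int) : k <= -2 -> C2 (YM a k u).
Proof.
move=> hk; have -> : k = - ((`|k|%N - 2)%N.+2)%:Z by lia.
exact: L1.
Qed.

Lemma comm a c v : C2 (YM a (-1) (YM c (-2) v)).
Proof.
have [[|N] [HN E]] := bor a c v (-1) (-2) 0 1 => //.
rewrite [X in _ = X]big_ord_recl [X in _ = _ + X]big1 in E; last first.
  by move=> i _; rewrite gbinom_0pos // mulr0 scale0r.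
rewrite /= expr0 mul1r gbinom_r0 scale1r addr0 scale1r in E.
rewrite !(addr0, subr0) in E.
have -> : YM a (-1) (YM c (-2) v) = (YM a (-1) (YM c (-2) v) - YM c (-2) (YM a (-1) v)) + YM c (-2) (YM a (-1) v) by rewrite subrK.
apply: spanD; last exact: C2_base.
rewrite -E; apply: span_sum => i; apply: spanZ; apply: L1z; lia.
Qed.

Lemma C2_aux (X Y Z : M) : C2 Y -> C2 Z -> C2 (X - (X - Y + Z)).
Proof.
move=> hY hZ; have -> : X - (X - Y + Z) = Y - Z.
  by rewrite opprD opprB addrA addrCA subrr addr0.
exact: spanB.
Qed.

Lemma assoc a b w : C2 (YM a (-1) (YM b (-1) w) - YM (Y Vs a (-1) b) (-1) w).
Proof.
have [[|N] [HN E]] := bor a b w 0 (-1) (-1) 1 => //.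
rewrite [X in X = _]big_ord_recl [X in _ + X = _]big1 in E; last first.
  by move=> i _; rewrite gbinom_0pos // scale0r.
rewrite [X in _ = X]big_ord_recl /= expr0 mul1r !gbinom_r0 !scale1r in E.
rewrite !(addr0, subr0, add0r) in E.
rewrite E; apply: C2_aux.
  apply: spanZ; exact: C2_base.
apply: span_sum => i; apply: spanZ; apply: spanB.
  apply: L1z; rewrite /bump leq0n /=; lia.
apply: (@spanZ _ _ _ ((-1) ^+ 1)). apply: L1z; rewrite /bump leq0n /=; lia.
Qed.

Lemma YMl0 n u : YM 0 n u = 0.
Proof.
have h := (proj1 (YM_bilin Ms)) 1 0 0 n u; rewrite scale1r addr0 scale1r in h.
apply: (addrI (YM 0 n u)); by rewrite -h addr0.
Qed.

Lemma YMlZ c a n u : YM (c *: a) n u = c *: YM a n u.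
Proof. by rewrite -(addr0 (c *: a)) (proj1 (YM_bilin Ms)) YMl0 addr0. Qed.

Variable W : M -> Prop.

Definition G (y : M) := exists a w, W w /\ y = YM a (-1) w.
Definition P (m : M) := exists x, in_span G x /\ C2 (m - x).

Lemma P0 : P 0.
Proof. exists 0; split; [exact: span0 | rewrite subrr; exact: span0]. Qed.

Lemma PD x y : P x -> P y -> P (x + y).
Proof.
case=> [x1 [h1 c1]] [y1 [h2 c2]]; exists (x1 + y1); split; first exact: spanD.
have -> : x + y - (x1 + y1) = (x - x1) + (y - y1).
  by rewrite opprD addrACA.
exact: spanD.
Qed.

Lemma PZ c x : P x -> P (c *: x).
Proof.
case=> [x1 [h1 c1]]; exists (c *: x1); split; first exact: spanZ.
by rewrite -scalerBr; apply: spanZ.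
Qed.

Lemma PC2 u v : P u -> C2 v -> P (u + v).
Proof.
case=> [x [h1 c1]] hv; exists x; split=> //.
by rewrite addrAC; apply: spanD.
Qed.

Lemma C2P v : C2 v -> P v.
Proof. by move=> hv; rewrite -(add0r v); apply: PC2 => //; apply: P0. Qed.

Lemma C2_m1 a c : C2 c -> C2 (YM a (-1) c).
Proof.
move: c; apply: (@span_ind _ _ _ (fun c => C2 (YM a (-1) c))).
- rewrite YM0; exact: span0.
- by move=> x y hx hy; rewrite YMD; apply: spanD.
- by move=> d x hx; rewrite YMZ; apply: spanZ.
- by move=> x [b [v ->]]; apply: comm.
Qed.

Lemma P_m1_span a x : in_span G x -> P (YM a (-1) x).
Proof.
move: x; apply: (@span_ind _ _ _ (fun x => P (YM a (-1) x))).
- rewrite YM0; exact: P0.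
- by move=> x1 y1 hx hy; rewrite YMD; apply: PD.
- by move=> d x1 hx; rewrite YMZ; apply: PZ.
- move=> y [b [w [Ww ->]]].
  exists (YM (Y Vs a (-1) b) (-1) w); split.
    by apply: span1; exists (Y Vs a (-1) b), w.
  exact: assoc.
Qed.

Lemma P_m1 a y : P y -> P (YM a (-1) y).
Proof.
case=> [x [hx hc]].
have -> : y = x + (y - x) by rewrite addrC subrK.
rewrite YMD; apply: PC2; [exact: P_m1_span | exact: C2_m1].
Qed.

Lemma P_word l w : (forall p, p \in l -> (1 <= p.2)%N) -> W w -> P (mode_word Ms l w).
Proof.
move=> hl Ww; elim: l hl => [|[a n] l IH] hl /=.
  exists w; split; last by rewrite subrr; apply: span0.
  apply: span1; exists (vac Vs), w; split=> //.
  by rewrite (YM_vac Ms).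
have hn : (1 <= n)%N by have := hl (a, n); rewrite inE eqxx; apply.
have hP : P (mode_word Ms l w).
  by apply: IH => p hp; apply: hl; rewrite inE hp orbT.
have [->|n2] : n = 1%N \/ (2 <= n)%N by lia.
  by apply: P_m1.
apply: C2P; apply: L1z; lia.
Qed.

End Main.

Theorem lemma4p5 (R : realType) (V : lmodType (complex R)) (Vs : VOA V)
    (M : lmodType (complex R)) (Ms : admissible_module Vs M) (W : M -> Prop) :
  CFT_type Vs ->
  homogeneous_subspace Ms W ->
  strongly_generated Ms W ->
  forall m : M, exists (k : nat) (a : 'I_k -> V) (w : 'I_k -> M),
    (forall i, W (w i)) /\ C2M Ms (m - \sum_(i < k) YM Ms (a i) (-1) (w i)).
Proof.
move=> _ _ SG m.
have [x [hx hc]] : @P _ _ _ _ Ms W m.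
  move: m (SG m); apply: (@span_ind _ _ _ (@P _ _ _ _ Ms W)).
  - exact: P0.
  - by move=> ? ? ? ?; apply: PD.
  - by move=> ? ? ?; apply: PZ.
  - move=> y [l [w [hl Ww ->]]]; apply: P_word => // p hp; exact: (proj2 (hl p hp)).
case: hx => k [c [s [hs ex]]].
have [f hf] := choice (fun i : 'I_k => hs i).
have [g hg] := choice hf.
exists k, (fun i => c i *: f i), g; split.
  by move=> i; case: (hg i).
suff -> : \sum_(i < k) YM Ms (c i *: f i) (-1) (g i) = x by [].
rewrite ex; apply: eq_bigr => i _; rewrite YMlZ.
by case: (hg i) => _ ->.
Qed.
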